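(* Let $G$ be a graph such that $|F_e|\le 3$ for every edge $e$ of $G$, and let $u,v,w$ be an induced path on three vertices in $G$, with the sets $B_i$ and $N^{+}(x)$ defined from $u,v,w$ as in the context. Then $|N^{+}(x)|\le 2$ for every $x\in\bigcup_{i\ge 0}B_i$.
   Context: All graphs are finite, simple and undirected. For an edge $e$ of $G$, $F_e$ denotes the set of all edges $e'$ of $G$ such that $V(e)\cup V(e')$ induces a path on three vertices in $G$ (i.e., $e$ and $e'$ share exactly one endpoint and their other endpoints are non-adjacent). Let $u,v,w$ be an induced path on three vertices ($uv,vw\in E(G)$, $uw\notin E(G)$), and let $A=\{u,v,w\}$. Let $B$ be the set of vertices not in $A$ having exactly one or two neighbors in $A$; let $C$ be the set of vertices adjacent to all three vertices of $A$; let $D$ be the set of vertices not in $A\cup B\cup C$ having at least one neighbor in $C$. For $i\ge1$, $B_i$ is the set of vertices $x\notin A\cup B\cup C\cup D$ whose distance in $G$ to the set $B$ is exactly $i$; also $B_0=B$ and $B_{-1}=A$. For $i\ge 0$ and $x\in B_i$, $N^{+}(x)$, $N^{=}(x)$, $N^{-}(x)$ denote the sets of neighbors of $x$ in $B_{i+1}$, $B_i$, $B_{i-1}$ respectively. *)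

(* Defs.v *)
(* A finite simple graph = symmetric irreflexive rel on a finType. *)
From mathcomp Require Import all_boot.
Set Implicit Arguments. Unset Strict Implicit. Unset Printing Implicit Defensive.

Section Defs.
Variables (T : finType) (adj : rel T).

(* F_e for the edge e = ab: edges e' = {c,d} such that V(e) u V(e') induces P3,
   i.e. e' shares exactly one endpoint with e and the other endpoints are
   non-adjacent. *)
Definition Fe (a b : T) : {set {set T}} :=
  [set e' : {set T} | [exists c : T, exists d : T,
     [&& adj c d, e' == [set c; d] &
       ((c == a) && (d != b) && ~~ adj b d) ||
       ((c == b) && (d != a) && ~~ adj a d)]]].

Fixpoint within (k : nat) (S : {set T}) (x : T) : bool :=
  match k with
  | 0 => x \in S
  | k'.+1 => within k' S x || [exists y, adj x y && within k' S y]
  end.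

Definition dist_eq (i : nat) (S : {set T}) (x : T) : bool :=
  within i S x && ((i == 0) || ~~ within i.-1 S x).

Variables (u v w : T).
Definition setA : {set T} := [set u; v; w].
Definition nbA (x : T) : nat := #|[set y in setA | adj x y]|.
Definition setB : {set T} := [set x | (x \notin setA) && (0 < nbA x <= 2)].
Definition setC : {set T} := [set x | (x \notin setA) && (nbA x == 3)].
Definition setD : {set T} :=
  [set x | (x \notin setA :|: setB :|: setC) && [exists y in setC, adj x y]].

Definition Bi (i : nat) : {set T} :=
  if i is 0 then setB
  else [set x | (x \notin setA :|: setB :|: setC :|: setD) && dist_eq i setB x].

Definition Nplus (i : nat) (x : T) : {set T} := [set y in Bi i.+1 | adj x y].
End Defs.

(* Main.v *)
Require Import Defs.
From mathcomp Require Import all_boot.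

Section Aux.
Variables (T : finType) (adj : rel T).
Hypothesis adj_sym : symmetric adj.
Hypothesis adj_irr : irreflexive adj.

Lemma within_mono k m S x : within adj k S x -> within adj (k + m) S x.
Proof.
elim: m => [|m IH]; first by rewrite addn0.
by move=> h; rewrite addnS /= IH.
Qed.

Lemma within_S k S x : within adj k.+1 S x = within adj k S x || [exists y, adj x y && within adj k S y].
Proof. by []. Qed.

Lemma within_adj k S x y : adj x y -> within adj k S y -> within adj k.+1 S x.
Proof. by move=> hxy hy /=; apply/orP; right; apply/existsP; exists y; rewrite hxy. Qed.

Lemma count_lemma (z x a : T) (N : {set T}) :
  #|Fe adj z x| <= 3 -> adj z x -> adj z a -> a != x -> ~~ adj x a ->
  (forall y, y \in N -> [&& adj x y, ~~ adj z y, y != z & y != a]) ->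
  #|N| <= 2.
Proof.
move=> hF hzx hza hax hxa hN.
pose f := fun y => [set x; y].
have finj : {in N &, injective f}.
  move=> y1 y2 h1 h2 e.
  have : y1 \in f y1 by rewrite !inE eqxx orbT.
  rewrite e !inE => /orP [/eqP e1|/eqP //].
  by move: (hN _ h1); rewrite -e1 adj_irr.
have sub : [set z; a] |: [set f y | y in N] \subset Fe adj z x.
  apply/subsetP => e; rewrite !inE => /orP [/eqP ->|/imsetP [y hy ->]].
    apply/existsP; exists z; apply/existsP; exists a.
    by rewrite hza !eqxx /= hax hxa.
  case/and4P: (hN _ hy) => hxy hzy hyz hya.
  apply/existsP; exists x; apply/existsP; exists y.
  by rewrite hxy !eqxx /= hyz hzy !orbT.
have nin : [set z; a] \notin [set f y | y in N].
  apply/imsetP => [[y hy e]].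
  have : z \in [set z; a] by rewrite !inE eqxx.
  rewrite e !inE => /orP [/eqP ezx|/eqP ezy].
    by move: hzx; rewrite ezx adj_irr.
  by case/and4P: (hN _ hy) => _ _ /eqP; rewrite ezy.
move: (subset_leq_card sub); rewrite cardsU1 nin card_in_imset // => h.
by have := leq_trans h hF.
Qed.

End Aux.
Arguments within_adj {T adj k S x y}.
Arguments within_mono {T adj k} m {S x}.


Theorem lemma5 (T : finType) (adj : rel T)
  (adj_sym : symmetric adj) (adj_irr : irreflexive adj)
  (hF : forall a b : T, adj a b -> #|Fe adj a b| <= 3)
  (u v w : T) (huv : adj u v) (hvw : adj v w) (huw : ~~ adj u w) (hneq : u != w) :
  forall (i : nat) (x : T), x \in Bi adj u v w i -> #|Nplus adj u v w i x| <= 2.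
Proof.
have nbA_le3 : forall y, nbA adj u v w y <= 3.
  move=> y; rewrite /nbA.
  have sub : [set t in setA u v w | adj y t] \subset setA u v w.
    by apply/subsetP => t; rewrite inE => /andP [].
  apply: (leq_trans (subset_leq_card sub)).
  by rewrite /setA setUC cardsU1 cards2; case: (_ \notin _); case: (_ != _).
have noA : forall y, y \notin setA u v w -> y \notin setB adj u v w ->
    y \notin Defs.setC adj u v w -> forall t, t \in setA u v w -> ~~ adj y t.
  move=> y hA hB hC t ht; apply/negP => hyt.
  have h0 : 0 < nbA adj u v w y.
    by rewrite /nbA card_gt0; apply/set0Pn; exists t; rewrite inE ht hyt.
  move: hA hB hC; rewrite !inE => hA; rewrite hA /= h0 /=.
  by have := nbA_le3 y; case: (nbA adj u v w y) => [|[|[|[|]]]].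
have Bnext : forall k y, y \in Bi adj u v w k.+1 ->
   [/\ y \notin setA u v w, y \notin setB adj u v w,
       (forall t, t \in setA u v w -> ~~ adj y t) & ~~ within adj k (setB adj u v w) y].
  move=> k y; rewrite /Bi inE => /andP [hn /andP [_ hw]].
  have hA : y \notin setA u v w by apply: contra hn => h; rewrite 3!in_setU h.
  have hB : y \notin setB adj u v w by apply: contra hn => h; rewrite 3!in_setU h !orbT.
  have hC : y \notin Defs.setC adj u v w by apply: contra hn => h; rewrite 3!in_setU h !orbT.
  by split => //; apply: noA.
move=> i x hx.
have key : forall z a, adj z x -> adj z a -> a != x -> ~~ adj x a ->
   (forall y, y \in Nplus adj u v w i x -> ~~ adj z y /\ y != z /\ y != a) ->
   #|Nplus adj u v w i x| <= 2.
  move=> z a hzx hza hax hxa hN.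
  apply: (@count_lemma T adj adj_irr z x a _ (hF _ _ hzx) hzx hza hax hxa) => y hy.
  have [h1 [h2 h3]] := hN y hy.
  by move: hy; rewrite inE => /andP [_ ->]; rewrite h1 h2 h3.
have uv : u != v by apply/eqP => e; move: huv; rewrite e adj_irr.
have vw : v != w by apply/eqP => e; move: hvw; rewrite e adj_irr.
have inA : forall t, t \in setA u v w -> (t == u) || (t == v) || (t == w).
  by move=> t; rewrite !inE.
case: i hx key => [|[|k]] hx key.
-
  move: hx; rewrite /= inE => /andP [hxA /andP [h0 h2]].
  suff [z [a [hzA haA hzx hza hxa]]] : exists z a, [/\ z \in setA u v w,
      a \in setA u v w, adj z x, adj z a & ~~ adj x a].
    apply: (key z a hzx hza _ hxa).
      by apply: contraNneq hxA => <-.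
    move=> y; rewrite inE => /andP [hy _].
    have [hyA _ hyn _] := Bnext 0 y hy.
    split; first by rewrite adj_sym hyn.
    split; first by apply: contraNneq hyA => ->.
    by apply: contraNneq hyA => ->.
  have Ain : u \in setA u v w /\ v \in setA u v w /\ w \in setA u v w.
    by rewrite !inE !eqxx !orbT.
  case: Ain => Au [Av Aw].
  case hxv: (adj x v).
  + case hxu: (adj x u).
    * case hxw: (adj x w).
      - exfalso; move: h2; rewrite /nbA.
        have -> : [set y in setA u v w | adj x y] = setA u v w.
          apply/setP => t; rewrite inE; case: (boolP (t \in setA u v w)) => //= ht.
          by case/orP: (inA t ht) => [/orP [] |] /eqP ->.
        by rewrite /setA setUC cardsU1 cards2 uv !inE negb_or [w == u]eq_sym [w == v]eq_sym hneq vw.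
      - exists v, w; split => //; first by rewrite adj_sym.
        by rewrite hxw.
    * exists v, u; split => //; first by rewrite adj_sym.
      by rewrite adj_sym. by rewrite hxu.
  + case hxu: (adj x u).
    * by exists u, v; split => //; [rewrite adj_sym | rewrite hxv].
    * case hxw: (adj x w).
      - exists w, v; split => //; [rewrite adj_sym | rewrite adj_sym | rewrite hxv] => //.
      - exfalso; move: h0; rewrite /nbA card_gt0 => /set0Pn [t].
        rewrite inE => /andP [ht hxt].
        by case/orP: (inA t ht) => [/orP [] |] /eqP e; move: hxt; rewrite e ?hxu ?hxv ?hxw.
-
  have [hxA hxB hxn hw0] := Bnext 0 x hx.
  move: hx; rewrite /Bi inE /dist_eq => /andP [_ /andP [hw1 _]].
  move: hw1 => /= /orP [h|/existsP [z /andP [hxz hzB]]]; first by move: hw0; rewrite /= h.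
  move: (hzB); rewrite inE => /andP [_ /andP [h0 _]].
  move: h0; rewrite /nbA card_gt0 => /set0Pn [a]; rewrite inE => /andP [haA hza].
  apply: (key z a); first by rewrite adj_sym.
  + done.
  + by apply: contraNneq hxA => <-.
  + exact: hxn.
  move=> y; rewrite inE => /andP [hy _].
  have [hyA hyB _ hyw] := Bnext 1 y hy.
  split; first by apply: contra hyw => hyz; apply/orP; right; apply/existsP; exists z; rewrite adj_sym hyz.
  split; first by apply: contraNneq hyB => ->.
  by apply: contraNneq hyA => ->.
-
  have [_ _ _ hwn] := Bnext k.+1 x hx.
  move: hx; rewrite /Bi inE /dist_eq => /andP [_ /andP [hw1 _]].
  move: hw1; rewrite within_S => /orP [h|/existsP [z /andP [hxz hz]]]; first by rewrite h in hwn.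
  have hzn : ~~ within adj k (setB adj u v w) z.
    by apply: contra hwn => h; apply: within_adj hxz h.
  move: hz; rewrite within_S => /orP [h|/existsP [a /andP [hza ha]]]; first by rewrite h in hzn.
  apply: (key z a); first by rewrite adj_sym.
  + done.
  + by apply: contraNneq hwn => <-; move: (within_mono 1 ha); rewrite addn1.
  + by apply: contra hwn => hxa; apply: within_adj hxa ha.
  move=> y; rewrite inE => /andP [hy _].
  have [_ _ _ hyw] := Bnext k.+2 y hy.
  have hz1 : within adj k.+1 (setB adj u v w) z by apply: (within_adj hza ha).
  split; first by apply: contra hyw => hyz; rewrite adj_sym in hyz; apply: within_adj hyz hz1.
  split; first by apply: contraNneq hyw => ->; move: (within_mono 1 hz1); rewrite addn1.
  by apply: contraNneq hyw => ->; move: (within_mono 2 ha); rewrite addn2.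
Qed.
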